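(* Let $G$ be a simple directed graph and $\sigma$ a set of its nodes. If $\sigma$ contains a clique of size $|\sigma|-1$ and $\sigma$ is not a clique, then $\sigma$ is not a stable motif (for any CTLN $W(G,\varepsilon,\delta)$ with legal parameters).
   Context: A clique is a set of nodes pairwise bidirectionally connected. Legal parameters: $\delta>0$, $0<\varepsilon<\frac{\delta}{\delta+1}$. $W=W(G,\varepsilon,\delta)$ has $W_{ii}=0$, $W_{ij}=-1+\varepsilon$ if $j\to i$, $W_{ij}=-1-\delta$ if $i\ne j$, $j\not\to i$; dynamics $\dot x_i=-x_i+[\sum_jW_{ij}x_j+\theta]_+$, $\theta>0$; CTLNs assumed nondegenerate ($\det(I-W_\sigma)\neq0$, Cramer determinants nonzero). $W_\sigma$ is the principal submatrix on $\sigma$. $\sigma$ is a permitted motif if $\theta(I-W_\sigma)^{-1}1_\sigma$ has all entries positive; a stable motif if permitted and all eigenvalues of $I-W_\sigma$ have positive real part. *)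

(* Defs.v *)
From HB Require Import structures.
From mathcomp Require Import all_boot all_order all_algebra.
From mathcomp Require Import complex.
From mathcomp Require Import Rstruct.
Set Implicit Arguments. Unset Strict Implicit. Unset Printing Implicit Defensive.
Import Order.TTheory GRing.Theory Num.Theory.
Local Open Scope ring_scope.

(* A simple directed graph on nodes 'I_n: edge relation e, with [e j i]
   meaning the edge j -> i; no self-loops. *)
Definition simple_digraph (n : nat) (e : rel 'I_n) : Prop :=
  forall i, ~~ e i i.

Definition is_clique (n : nat) (e : rel 'I_n) (tau : {set 'I_n}) : Prop :=
  forall i j, i \in tau -> j \in tau -> i != j -> e i j && e j i.

Definition legal_params (eps delta : Rdefinitions.R) : Prop :=
  0 < delta /\ 0 < eps /\ eps < delta / (delta + 1).

Definition ctln_W (n : nat) (e : rel 'I_n) (eps delta : Rdefinitions.R) : 'M[Rdefinitions.R]_n :=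
  \matrix_(i, j) (if i == j then 0
                  else if e j i then -1 + eps else -1 - delta).

Definition principal_sub (n : nat) (W : 'M[Rdefinitions.R]_n) (sigma : {set 'I_n})
  : 'M[Rdefinitions.R]_#|sigma| :=
  \matrix_(i, j) W (enum_val i) (enum_val j).

Definition IminusW (n : nat) (W : 'M[Rdefinitions.R]_n) (sigma : {set 'I_n})
  : 'M[Rdefinitions.R]_#|sigma| := 1%:M - principal_sub W sigma.

Definition cramer_det (n : nat) (W : 'M[Rdefinitions.R]_n) (sigma : {set 'I_n})
  (k : 'I_#|sigma|) : Rdefinitions.R :=
  \det (\matrix_(i, j) (if j == k then 1 else IminusW W sigma i j)).

Definition ctln_nondegenerate (n : nat) (W : 'M[Rdefinitions.R]_n) : Prop :=
  forall sigma : {set 'I_n},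
    \det (IminusW W sigma) != 0 /\ forall k : 'I_#|sigma|, @cramer_det n W sigma k != 0.

Definition permitted_motif (n : nat) (W : 'M[Rdefinitions.R]_n) (theta : Rdefinitions.R)
  (sigma : {set 'I_n}) : Prop :=
  forall i, 0 < (theta *: (invmx (IminusW W sigma) *m (const_mx 1 : 'cV[Rdefinitions.R]_#|sigma|))) i ord0.

Definition stable_motif (n : nat) (W : 'M[Rdefinitions.R]_n) (theta : Rdefinitions.R)
  (sigma : {set 'I_n}) : Prop :=
  permitted_motif W theta sigma /\
  forall z : Rdefinitions.R[i],
    root (map_poly (fun x : Rdefinitions.R => (x%:C)%C) (char_poly (IminusW W sigma))) z ->
    0 < complex.Re z.

(* Main.v *)
Require Import Defs.
From HB Require Import structures.
From mathcomp Require Import all_boot all_order all_algebra.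
From mathcomp Require Import complex.
From mathcomp Require Import Rstruct.
From mathcomp Require Import polyrcf.
From mathcomp Require Import ring lra.
Import Order.TTheory GRing.Theory Num.Theory.
Local Open Scope ring_scope.

Notation RR := Rdefinitions.R.

Lemma det3 (F : comNzRingType) (f : nat -> nat -> F) :
  \det (\matrix_(i < 3, j < 3) f i j) = f 0%N 0%N * (f 1%N 1%N * f 2%N 2%N - f 1%N 2%N * f 2%N 1%N)
         - f 0%N 1%N * (f 1%N 0%N * f 2%N 2%N - f 1%N 2%N * f 2%N 0%N)
         + f 0%N 2%N * (f 1%N 0%N * f 2%N 1%N - f 1%N 1%N * f 2%N 0%N).
Proof.
rewrite (expand_det_row _ ord0) !big_ord_recl big_ord0 /cofactor.
rewrite !(expand_det_row _ ord0) !big_ord_recl !big_ord0 /cofactor ?det_mx00 !det_mx11 !mxE /=.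
rewrite !expr0 !expr1. ring.
Qed.

Lemma sum_delta k (i : 'I_k) (F : 'I_k -> RR) :
  \sum_j (j == i)%:R * F j = F i.
Proof.
rewrite (bigD1 i) //= eqxx mul1r big1 ?addr0 // => j /negbTE ->.
by rewrite mul0r.
Qed.

Lemma sum_const_nat k (c : RR) : \sum_(j < k) c = k%:R * c.
Proof. by rewrite sumr_const card_ord mulr_natl. Qed.


Lemma mulA_col {k : nat} {A : 'M[RR]_k} {v0 : 'I_k} {eps : RR} {al be : 'I_k -> RR}
  (hA : forall i j, A i j = (1 - eps) + (i == j)%:R * eps
   + (i == v0)%:R * be j + (j == v0)%:R * al i) (x : 'cV[RR]_k) i :
  (A *m x) i 0 = (1 - eps) * (\sum_j x j 0) + eps * x i 0
     + (i == v0)%:R * (\sum_j be j * x j 0) + al i * x v0 0.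
Proof.
rewrite mxE.
transitivity (\sum_j ((1 - eps) * x j 0 + (j == i)%:R * (eps * x j 0)
   + (i == v0)%:R * (be j * x j 0) + (j == v0)%:R * (al i * x j 0))).
  by apply: eq_bigr => j _; rewrite hA (eq_sym i j); ring.
by rewrite !big_split /= !sum_delta -!mulr_sumr.
Qed.

Lemma mulA_row {k : nat} {A : 'M[RR]_k} {v0 : 'I_k} {eps : RR} {al be : 'I_k -> RR}
  (hA : forall i j, A i j = (1 - eps) + (i == j)%:R * eps
   + (i == v0)%:R * be j + (j == v0)%:R * al i) (g : 'rV[RR]_k) j :
  (g *m A) 0 j = (1 - eps) * (\sum_i g 0 i) + eps * g 0 j
     + (j == v0)%:R * (\sum_i al i * g 0 i) + be j * g 0 v0.
Proof.
rewrite mxE.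
transitivity (\sum_i ((1 - eps) * g 0 i + (i == j)%:R * (eps * g 0 i)
   + (i == v0)%:R * (be j * g 0 i) + (j == v0)%:R * (al i * g 0 i))).
  by apply: eq_bigr => i _; rewrite hA; ring.
by rewrite !big_split /= !sum_delta -!mulr_sumr; ring.
Qed.

Lemma core k (A : 'M[RR]_k) (v0 : 'I_k) (eps delta : RR) (al be : 'I_k -> RR)
  (x : 'cV[RR]_k) :
  0 < eps -> 0 < delta ->
  (forall i j, A i j = (1 - eps) + (i == j)%:R * eps
   + (i == v0)%:R * be j + (j == v0)%:R * al i) ->
  al v0 = 0 -> be v0 = 0 ->
  (forall i, al i = 0 \/ al i = eps + delta) ->
  (forall i, be i = 0 \/ be i = eps + delta) ->
  (exists l, al l = eps + delta \/ be l = eps + delta) ->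
  A *m x = const_mx 1 -> (forall i, 0 < x i 0) ->
  (forall lam : RR, lam <= 0 -> forall g : 'rV[RR]_k, g *m A = lam *: g -> g = 0) ->
  False.
Proof.
move=> he hd hA al0 be0 hal hbe [l hl] hAx hx hstab.
have Ax i : (1 - eps) * (\sum_j x j 0) + eps * x i 0
     + (i == v0)%:R * (\sum_j be j * x j 0) + al i * x v0 0 = 1.
  by rewrite -(mulA_col hA) hAx mxE.
have hy := hx v0.
case: (boolP [forall j, be j == 0]) => [/forallP hb0 | /forallP hb].
  have Rb0 : \sum_j be j * x j 0 = 0.
    by rewrite big1 // => j _; rewrite (eqP (hb0 j)) mul0r.
  have hal' : al l = eps + delta.
    case: hl => // hbl; move: (eqP (hb0 l)); rewrite hbl => /eqP; lra.
  have := Ax v0; have := Ax l; rewrite Rb0 al0 hal' => e1 e2.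
  have := hx l => hxl.
  have : 0 < eps * x l 0 by apply: mulr_gt0.
  have : 0 < delta * x v0 0 by apply: mulr_gt0.
  lra.
have [l' hl'] : exists l', be l' = eps + delta.
  have [j /negP hj] : exists j, ~~ (be j == 0).
    by apply/existsP; rewrite -negb_forall; apply/forallP.
  by exists j; case: (hbe j) => // /eqP.
set gam := 1 - eps.
set S := \sum_j x j 0.
set Rb := \sum_j be j * x j 0.
set Sa := \sum_j al j.
set Sb := \sum_j be j.
set r := \sum_j al j * be j.
set y := x v0 0.
have E1 : gam * S + eps * y + Rb - 1 = 0.
  have := Ax v0; rewrite eqxx al0 -/y mul0r addr0 mul1r -/gam -/S -/Rb; lra.
have E2 : (k%:R * gam + eps) * S + Rb + Sa * y - k%:R = 0.
  have : \sum_i (gam * S + eps * x i 0 + (i == v0)%:R * Rb + al i * y) = \sum_(i < k) 1.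
    by apply: eq_bigr => i _; exact: Ax i.
  rewrite !big_split /= sum_const_nat -/S.
  rewrite sum_delta -mulr_sumr -mulr_suml -/Sa -/S sum_const_nat mulr1 => H.
  rewrite -[X in _ - X]H. ring.
have E3 : gam * Sb * S + eps * Rb + r * y - Sb = 0.
  have : \sum_i be i * (gam * S + eps * x i 0 + (i == v0)%:R * Rb + al i * y) = \sum_(i < k) be i * 1.
    by apply: eq_bigr => i _; rewrite Ax.
  under eq_bigr do rewrite !mulrDr.
  rewrite !big_split /=.
  under [X in _ + X + _ + _ = _]eq_bigr do rewrite mulrA (mulrC (be _)) -mulrA.
  under [X in _ + X = _]eq_bigr do rewrite mulrA (mulrC (be _)) -mulrA.
  rewrite -!mulr_suml -!mulr_sumr -/Sb -/Rb.
  rewrite (bigD1 v0) //= be0 mul0r add0r big1; last first.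
    by move=> i /negbTE ->; rewrite mul0r mulr0.
  have Hr : \sum_i al i * (be i * y) = r * y.
    by rewrite /r mulr_suml; apply: eq_bigr => i _; rewrite mulrA.
  rewrite Hr mulr1 => H. rewrite -[X in _ - X]H.
  ring.
have Sbge : eps + delta <= Sb.
  rewrite /Sb (bigD1 l') //= hl' lerDl; apply: sumr_ge0 => j _.
  by case: (hbe j) => ->; lra.
pose mf := fun i j : nat => match i, j with
  | O, O => k%:R * gam + eps | O, S O => Sa | O, _ => 1
  | S O, O => gam | S O, S O => eps | S O, _ => 1
  | _, O => gam * Sb | _, S O => r | _, _ => eps end.
pose M := \matrix_(i < 3, j < 3) mf i j.
have key : y * \det M - eps * (eps - Sb) =
   ((k%:R * gam + eps) * eps - gam * Sb) * (gam * S + eps * y + Rb - 1)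
   - (gam * eps - gam * Sb) * ((k%:R * gam + eps) * S + Rb + Sa * y - k%:R)
   + (gam - k%:R * gam - eps) * (gam * Sb * S + eps * Rb + r * y - Sb).
  rewrite /M det3 /mf /= /gam; ring.
rewrite E1 E2 E3 !mulr0 subr0 addr0 in key; move/eqP: key; rewrite subr_eq0 => /eqP key.
have hdet : \det M < 0.
  have : y * \det M < 0 by rewrite key pmulr_rlt0 //; lra.
  by rewrite pmulr_rlt0.
have noroot : {in `]-oo, 0], forall lam, ~~ root (char_poly M) lam}.
  move=> lam; rewrite in_itv /= => hlam; apply/negP => rt.
  have /eigenvalueP [w wM wnz] : eigenvalue M lam by rewrite eigenvalue_root_char.
  pose wf n := w 0 (inord n).
  have wE i : w 0 i = wf i by rewrite /wf inord_val.
  have ej j : \sum_(i < 3) w 0 i * M i j = lam * w 0 j.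
    by have := congr1 (fun m : 'rV[RR]_3 => m 0 j) wM; rewrite !mxE.
  have e0 := ej (@Ordinal 3 0 isT).
  have e1 := ej (@Ordinal 3 1 isT).
  have e2 := ej (@Ordinal 3 2 isT).
  have b1 : bump 0 0 = 1%N by [].
  have b2 : bump 0 1 = 2%N by [].
  rewrite !big_ord_recl !big_ord0 !mxE /= !wE /= b1 b2 in e0 e1 e2.
  clear ej.
  pose g := \row_(j < k) (wf 0%N + (j == v0)%:R * wf 1%N + be j * wf 2%N).
  have gv0 : g 0 v0 = wf 0%N + wf 1%N .
 rewrite mxE eqxx be0 /=. ring.
  have gS : \sum_i g 0 i = k%:R * wf 0%N + wf 1%N + Sb * wf 2%N.
    transitivity (\sum_i (wf 0%N + (i == v0)%:R * wf 1%N + be i * wf 2%N)).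
      by apply: eq_bigr => i _; rewrite mxE.
    by rewrite !big_split /= sum_const_nat sum_delta -mulr_suml.
  have gAl : \sum_i al i * g 0 i = Sa * wf 0%N + r * wf 2%N.
    transitivity (\sum_i (al i * wf 0%N + (i == v0)%:R * (al i * wf 1%N)
                          + (al i * be i) * wf 2%N)).
      by apply: eq_bigr => i _; rewrite mxE; ring.
    by rewrite !big_split /= sum_delta al0 -!mulr_suml -/Sa -/r /=; ring.
  have E0' : (k%:R * gam + eps) * wf 0%N + gam * wf 1%N + gam * Sb * wf 2%N = lam * wf 0%N.
    by rewrite -e0; ring.
  have E1' : Sa * wf 0%N + eps * wf 1%N + r * wf 2%N = lam * wf 1%N.
    by rewrite -e1; ring.
  have E2' : wf 0%N + wf 1%N + eps * wf 2%N = lam * wf 2%N.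
    by rewrite -e2; ring.
  have gA : g *m A = lam *: g.
    apply/rowP => j; rewrite (mulA_row hA) gS gAl gv0 !mxE.
    rewrite !mulrDr (mulrCA lam) (mulrCA lam (be j)) -E0' -E1' -E2' /= /gam. ring.
  have g0 := hstab lam hlam g gA.
  have h1 : wf 0%N + wf 1%N = 0.
    by have := congr1 (fun m : 'rV[RR]_k => m 0 v0) g0; rewrite gv0 mxE.
  have h2 : k%:R * wf 0%N + wf 1%N + Sb * wf 2%N = 0.
    by rewrite -gS g0 big1 // => i _; rewrite mxE.
  have w2 : wf 2%N = 0.
    have : (eps - lam) * wf 2%N = 0 by rewrite mulrBl -E2' h1; ring.
    by move/eqP; rewrite mulf_eq0 => /orP [/eqP|/eqP] //; lra.
  have h3 : (eps - lam) * wf 0%N = ((k%:R * gam + eps) * wf 0%N + gam * wf 1%N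
      + gam * Sb * wf 2%N - lam * wf 0%N) - gam * (k%:R * wf 0%N + wf 1%N + Sb * wf 2%N).
    by ring.
  rewrite E0' h2 subrr mulr0 subr0 in h3.
  have w0 : wf 0%N = 0.
    by move/eqP: h3; rewrite mulf_eq0 => /orP [/eqP|/eqP] //; lra.
  have w1 : wf 1%N = 0 by lra.
  move/eqP: wnz; apply; apply/rowP => i; rewrite wE mxE.
  by case: i => [[|[|[|]]]] //= _.
have := @sgp_minftyP _ 0 (char_poly M) noroot 0.
rewrite in_itv /= lexx => /(_ isT).
rewrite horner_coef0 char_poly_det /sgp_minfty size_char_poly.
rewrite (monicP (char_poly_monic M)) /= mulr1.
have m3 : (-1) ^+ 3 = -1 :> RR by rewrite !exprS expr0; ring.
rewrite m3 mulN1r gtr0_sg; last lra.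
rewrite ltr0_sg; last lra.
lra.
Qed.

Theorem proposition2 (n : nat) (e : rel 'I_n) (sigma : {set 'I_n})
  (eps delta theta : Rdefinitions.R) :
  simple_digraph e ->
  legal_params eps delta ->
  0 < theta ->
  ctln_nondegenerate (ctln_W e eps delta) ->
  (exists tau : {set 'I_n},
      tau \subset sigma /\ #|tau| = (#|sigma| - 1)%N /\ is_clique e tau) ->
  ~ is_clique e sigma ->
  ~ stable_motif (ctln_W e eps delta) theta sigma.
Proof.
move=> hsimp [hd [he heps]] hth hnd [tau [tsub [tcard tcl]]] hncl [hperm hstab].
have hep1 : eps < 1.
  have : delta / (delta + 1) < 1 by rewrite ltr_pdivrMr; lra.
  lra.
have hsz : (0 < #|sigma|)%N.
  rewrite lt0n; apply/negP => /eqP /cards0_eq s0; apply: hncl => i j.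
  by rewrite s0 inE.
have [v hv] : exists v, sigma :\: tau = [set v].
  apply/cards1P; rewrite cardsDS // tcard; apply/eqP.
  by case: #|sigma| hsz => // m _; rewrite subn1 /= subSnn.
have vs : v \in sigma by have := set11 v; rewrite -hv inE => /andP [].
have vt : v \notin tau by have := set11 v; rewrite -hv inE => /andP [].
have notv x : x \in sigma -> x \notin tau -> x = v.
  by move=> xs xt; apply/set1P; rewrite -hv inE xt.
set ev := (@enum_val _ (mem sigma)).
set v0 := enum_rank_in vs v.
have ev0 : ev v0 = v by rewrite /ev /v0 enum_rankK_in.
have evin i : ev i \in sigma by exact: enum_valP.
have evinj : injective ev by exact: enum_val_inj.
set W := ctln_W e eps delta.
set A := IminusW W sigma.
have hAe i j : A i j = if i == j then 1 else if e (ev j) (ev i) then 1 - eps else 1 + delta.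
  rewrite /A /IminusW /principal_sub /W /ctln_W !mxE (inj_eq evinj).
  by case: (eqVneq i j) => _ /=; [ring | case: (e _ _) => /=; ring].
have evt i : i != v0 -> ev i \in tau.
  move=> iv; apply/negPn/negP => it.
  by move: iv; rewrite -(inj_eq evinj) ev0 (notv _ (evin i) it) eqxx.
pose al i := if i == v0 then 0 else A i v0 - (1 - eps).
pose be j := if j == v0 then 0 else A v0 j - (1 - eps).
have al0 : al v0 = 0 by rewrite /al eqxx.
have be0 : be v0 = 0 by rewrite /be eqxx.
have hal i : al i = 0 \/ al i = eps + delta.
  rewrite /al; case: eqP => [_|/eqP iv]; first by left.
  rewrite hAe (negbTE iv); case: (e _ _); [left | right]; ring.
have hbe i : be i = 0 \/ be i = eps + delta.
  rewrite /be; case: eqP => [_|/eqP iv]; first by left.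
  rewrite hAe eq_sym (negbTE iv); case: (e _ _); [left | right]; ring.
have hA i j : A i j = (1 - eps) + (i == j)%:R * eps
   + (i == v0)%:R * be j + (j == v0)%:R * al i.
  case: (eqVneq i j) => [<-|ij].
    rewrite hAe eqxx /be /al; case: (eqVneq i v0) => _ /=; ring.
  rewrite /= mul0r addr0.
  case: (eqVneq i v0) => [iv|iv].
    rewrite /be -iv eq_sym (negbTE ij) /=; ring.
  case: (eqVneq j v0) => [jv|jv].
    rewrite /al (negbTE iv) -jv /=; ring.
  rewrite /= hAe (negbTE ij).
  have := tcl _ _ (evt _ iv) (evt _ jv); rewrite (inj_eq evinj) ij => /(_ isT) /andP [_ ->].
  ring.
have hex : exists l, al l = eps + delta \/ be l = eps + delta.
  case: (boolP [exists l, (al l == eps + delta) || (be l == eps + delta)]).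
    by move=> /existsP [l /orP [/eqP|/eqP]]; exists l; [left|right].
  rewrite negb_exists => /forallP hall.
  have hz l : al l = 0 /\ be l = 0.
    have := hall l; rewrite negb_or => /andP [h1 h2].
    by split; [case: (hal l) => // /eqP; rewrite (negbTE h1) | case: (hbe l) => // /eqP; rewrite (negbTE h2)].
  exfalso; apply: hncl.
  have claim y : y \in sigma -> y != v -> e v y && e y v.
    move=> ys yv; set iy := enum_rank_in vs y.
    have evy : ev iy = y by rewrite /ev /iy enum_rankK_in.
    have iyv : iy != v0 by rewrite -(inj_eq evinj) evy ev0.
    have [h1 h2] := hz iy.
    move: h1 h2; rewrite /al /be (negbTE iyv) !hAe (negbTE iyv) eq_sym (negbTE iyv) evy ev0.
    case: (e v y); case: (e y v) => //= /eqP; rewrite ?subr_eq0 => /eqP; lra.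
  move=> x y xs ys xy.
  case: (boolP (x \in tau)) => xt; last first.
    by rewrite (notv _ xs xt) claim // -(notv _ xs xt) eq_sym.
  case: (boolP (y \in tau)) => yt; last first.
    by rewrite (notv _ ys yt) andbC claim // -(notv _ ys yt).
  exact: tcl.
have [hdet _] := hnd sigma.
have Aunit : A \in unitmx by rewrite unitmxE unitfE.
pose x := invmx A *m (const_mx 1 : 'cV[Rdefinitions.R]_#|sigma|).
have hAx : A *m x = const_mx 1 by rewrite /x mulmxA mulmxV // mul1mx.
have hx i : 0 < x i 0.
  by have := hperm i; rewrite mxE -/A -/x pmulr_rgt0.
apply: (@core _ A v0 eps delta al be x he hd hA al0 be0 hal hbe hex hAx hx).
move=> lam hlam g gA; case: (eqVneq g 0) => // gnz; exfalso.
have rt : root (char_poly A) lam.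
  by rewrite -eigenvalue_root_char; apply/eigenvalueP; exists g.
have := hstab (lam%:C)%C (rmorph_root (real_complex Rdefinitions.R) rt).
rewrite /=; lra.
Qed.
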